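(* (1) Let $S$ be a simple random walk and $\overline S=T(S)$. Then (i) for all $n\ge0$, $\sigma(\overline S_j,j\le n)\vee\sigma(S_1)=\sigma(S_j,j\le n+1)$; (ii) $S_1$ is independent of $\sigma(\overline S)$. (2) Let $\overline S=(\overline S_k)_{k\ge0}$ be a simple random walk. Then (i) (on a possibly enlarged probability space) there exists a simple random walk $S$ with $T(S)=\overline S$, and consequently, with $\overline Y_n:=\max_{k\le n}\overline S_k-\overline S_n$, one has $|\overline Y_n-|S_n||\le 2$ for all $n\in\mathbb N$; (ii) the set of simple random walks $S'$ with $T(S')=\overline S$ consists (almost surely) of exactly the two elements $S$ and $-S$, where $S$ is determined by $\overline S$ together with the additional independent sign $S_1$.
   Context: A simple random walk (SRW) $S=(S_n)_{n\ge0}$ has $S_0=0$ and i.i.d. steps $X_i=S_i-S_{i-1}$ uniform on $\{-1,1\}$. The Csaki–Vincze transformation $T$: given $S$, define $\tau_0=0$, $\tau_1=\min\{i>0:S_{i-1}S_{i+1}<0\}$, $\tau_{l+1}=\min\{i>\tau_l:S_{i-1}S_{i+1}<0\}$ for $l\ge1$; for $j\ge1$ set $\overline X_j=\sum_{l\ge0}(-1)^{l+1}X_1X_{j+1}1_{\{\tau_l+1\le j\le\tau_{l+1}\}}$, and $\overline S_0=0$, $\overline S_j=\overline X_1+\dots+\overline X_j$. Then $T(S):=\overline S$. It is known (Csaki–Vincze) that $\overline S=T(S)$ is a SRW satisfying $|\max_{k\le n}\overline S_k-\overline S_n-|S_n||\le2$ for all $n$, and that $\tau_l=\min\{n\ge0:\overline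 S_n=2l\}$ for all $l\ge1$. *)

(* Defs.v *)
From HB Require Import structures.
From mathcomp Require Import all_boot all_order all_algebra.
From mathcomp Require Import all_classical all_reals all_analysis.
Set Implicit Arguments. Unset Strict Implicit. Unset Printing Implicit Defensive.
Import Order.TTheory GRing.Theory Num.Theory.
Local Open Scope classical_set_scope.
Local Open Scope ring_scope.

Definition srw_path (s : nat -> int) : Prop :=
  s 0%N = 0 /\ forall i, `|s i.+1 - s i| = 1.

Definition step (s : nat -> int) (i : nat) : int := s i - s i.-1.

(* tau_{l+1} = min{ i > tau_l : S_{i-1} S_{i+1} < 0 }, None = +infinity
   (minimum of the empty set). *)
Definition next_tau (s : nat -> int) (t : nat) : option nat :=
  let p : pred nat := fun i => (t < i)%N && (s i.-1 * s i.+1 < 0) in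
  match pselect (exists i, p i) with
  | left h => Some (ex_minn h)
  | right _ => None
  end.

Fixpoint tau (s : nat -> int) (l : nat) : option nat :=
  match l with
  | 0%N => Some 0%N
  | l'.+1 => match tau s l' with Some t => next_tau s t | None => None end
  end.

Definition tau_ind (s : nat -> int) (l j : nat) : bool :=
  match tau s l, tau s l.+1 with
  | Some a, Some b => (a < j <= b)%N
  | Some a, None => (a < j)%N
  | None, _ => false
  end.

(* Xbar_j = sum_{l >= 0} (-1)^{l+1} X_1 X_{j+1} 1{tau_l+1 <= j <= tau_{l+1}},
   for j >= 1. Since tau_l >= l, only l < j can contribute, so the sum is
   taken over 0 <= l < j. *)
Definition Xbar (s : nat -> int) (j : nat) : int :=
  \sum_(0 <= l < j) ((-1) ^+ l.+1 * step s 1 * step s j.+1 * (tau_ind s l j)%:Z).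

Definition CV (s : nat -> int) : nat -> int :=
  fun j => \sum_(1 <= k < j.+1) Xbar s k.

Section Prob.
Context {d : measure_display} {Omega : measurableType d} {R : realType}.
Variable P : probability Omega R.
Local Open Scope ereal_scope.

Definition int_rv (Y : Omega -> int) : Prop :=
  forall B : set int, measurable (Y @^-1` B).

Definition mutually_indep (Y : nat -> Omega -> int) : Prop :=
  forall (J : seq nat) (B : nat -> set int), uniq J ->
    P [set w | forall j, j \in J -> B j (Y j w)]
    = \big[*%E/1%E]_(j <- J) P (Y j @^-1` B j).

Definition rademacher (Y : Omega -> int) : Prop :=
  int_rv Y /\ (forall w, Y w = 1%R \/ Y w = (-1)%R) /\
  P (Y @^-1` [set 1%R]) = (2^-1)%:E.

Definition SRW (S : nat -> Omega -> int) : Prop :=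
  [/\ forall w, S 0%N w = 0%R,
      forall n, int_rv (S n),
      forall i, rademacher (fun w => S i.+1 w - S i w)%R &
      mutually_indep (fun i w => S i.+1 w - S i w)%R].

Definition sigma_rv (Y : nat -> Omega -> int) (J : set nat) : set (set Omega) :=
  <<s [set A | exists j (B : set int), J j /\ A = Y j @^-1` B] >>.

Definition sjoin (F G : set (set Omega)) : set (set Omega) := <<s F `|` G >>.

Definition indep_rv_sigma (Y : Omega -> int) (F : set (set Omega)) : Prop :=
  forall (B : set int) (A : set Omega), F A ->
    P (Y @^-1` B `&` A) = P (Y @^-1` B) * P A.

End Prob.

Definition Tproc {Omega : Type} (S : nat -> Omega -> int) : nat -> Omega -> int :=
  fun n w => CV (fun k => S k w) n.

Definition Ybar {Omega : Type} (Sb : nat -> Omega -> int) (n : nat) (w : Omega) : int :=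
  (\big[Order.max/Sb 0%N w]_(k < n.+1) Sb k w - Sb n w)%R.

(* Main.v *)
Require Import Defs.
From HB Require Import structures.
From mathcomp Require Import all_boot all_order all_algebra.
From mathcomp Require Import all_classical all_reals all_analysis.
From mathcomp Require Import zify ring lra.
Set Implicit Arguments. Unset Strict Implicit. Unset Printing Implicit Defensive.
Import Order.TTheory GRing.Theory Num.Theory.
Local Open Scope classical_set_scope.
Local Open Scope ring_scope.


Definition cr (s : nat -> int) (i : nat) : bool := (0 < i)%N && (s i.-1 * s i.+1 < 0).
Definition cnt (s : nat -> int) (n : nat) : nat := count (cr s) (iota 0 n).

Lemma cntS s n : cnt s n.+1 = (cnt s n + cr s n)%N.
Proof. by rewrite /cnt -addn1 iotaD count_cat /= add0n addn0. Qed.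

Lemma cnt_split s m n : (m <= n)%N -> cnt s n = (cnt s m + count (cr s) (iota m (n - m)))%N.
Proof. by move=> mn; rewrite /cnt -{1}(subnKC mn) iotaD count_cat. Qed.

Lemma cnt_mono s m n : (m <= n)%N -> (cnt s m <= cnt s n)%N.
Proof. by move=> mn; rewrite (cnt_split s mn) leq_addr. Qed.

Lemma cnt1 s : cnt s 1 = 0%N.
Proof. by []. Qed.

Lemma tau_spec s l : match tau s l with
  | Some t => [/\ cnt s t.+1 = l, (l = 0 -> t = 0)%N & (0 < l -> cr s t)%N]
  | None => forall n, (cnt s n < l)%N end.
Proof.
elim: l => [|l IH] /=; first by split.
case E: (tau s l) IH => [t|] IH; last by move=> n; exact: ltn_trans (IH n) _.
case: IH => Ht _ _; rewrite /next_tau; case: pselect => [h|h].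
- case: ex_minnP => i /andP [ti pi] imin.
  have cri : cr s i by rewrite /cr pi andbT; exact: leq_ltn_trans (leq0n t) ti.
  split => //; rewrite cntS (cnt_split s ti) Ht cri.
  have -> : count (cr s) (iota t.+1 (i - t.+1)) = 0%N.
    apply/eqP; rewrite -leqn0 leqNgt -has_count; apply/hasP => -[k].
    rewrite mem_iota subnKC // => /andP[tk ki] /andP[_ pk].
    have := imin k; rewrite tk pk /= => /(_ isT). by rewrite leqNgt ki.
  by rewrite addn0 addn1.
- move=> n; rewrite ltnS; case: (leqP n t.+1) => nt.
    by rewrite -Ht; exact: cnt_mono.
  rewrite (cnt_split s (ltnW nt)) Ht.
  have -> : count (cr s) (iota t.+1 (n - t.+1)) = 0%N.
    apply/eqP; rewrite -leqn0 leqNgt -has_count; apply/hasP => -[k].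
    rewrite mem_iota subnKC ?(ltnW nt) // => /andP[tk _] /andP[_ pk].
    by apply: h; exists k; rewrite tk pk.
  by rewrite addn0.
Qed.

Lemma tau_ind_eq s l j : (0 < j)%N -> tau_ind s l j = (cnt s j == l).
Proof.
move=> j0; have H0 := tau_spec s l; have H1 := tau_spec s l.+1.
rewrite /tau_ind /=; move: H1 => /=.
case E: (tau s l) H0 => [a|] H0 /=; last by move=> _; apply/esym/negbTE; rewrite neq_ltn H0.
case: H0 => Ha Ha0 Hacr.
case F: (next_tau s a) => [b|] H1.
- case: H1 => Hb _ /(_ isT) Hbcr.
  have Hb' : cnt s b = l by move: Hb; rewrite cntS Hbcr addn1 => -[].
  apply/idP/idP.
  + case/andP => aj jb; rewrite eqn_leq; apply/andP; split.
      by rewrite -Hb'; exact: cnt_mono.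
    by rewrite -Ha; exact: cnt_mono.
  + move/eqP => Hj; apply/andP; split.
      rewrite ltnNge; apply/negP => ja.
      case: (posnP l) => [l0|lp].
        by move: ja; rewrite (Ha0 l0) leqn0 => /eqP j00; rewrite j00 in j0.
      have := Hacr lp; move: Ha; rewrite cntS => Ha' craa.
      have := cnt_mono s ja; rewrite Hj; move: Ha'; rewrite craa; lia.
    rewrite leqNgt; apply/negP => bj.
    have := cnt_mono s bj; rewrite Hj Hb; lia.
- apply/idP/idP.
  + move=> aj; have := H1 j; have := cnt_mono s aj; rewrite Ha; lia.
  + move/eqP => Hj; rewrite ltnNge; apply/negP => ja.
    case: (posnP l) => [l0|lp].
      by move: ja; rewrite (Ha0 l0) leqn0 => /eqP j00; rewrite j00 in j0.
    have := Hacr lp; move: Ha; rewrite cntS => Ha' craa.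
    have := cnt_mono s ja; rewrite Hj; move: Ha'; rewrite craa; lia.
Qed.

Lemma sum_ind (F : nat -> int) c j : (c < j)%N ->
  \sum_(0 <= l < j) F l * ((c == l) : nat)%:Z = F c.
Proof.
move=> cj; rewrite big_mkord (bigD1 (Ordinal cj)) //= eqxx mulr1 big1 ?addr0 //.
move=> i /negbTE Hi; suff -> : (c == i) = false by rewrite mulr0.
by apply/negbTE; apply: contraFneq Hi => ci; apply/eqP/val_inj.
Qed.

Lemma cnt_lt s j : (0 < j)%N -> (cnt s j < j)%N.
Proof.
move=> j0; rewrite (cnt_split s j0) cnt1 add0n.
by apply: leq_ltn_trans (count_size _ _) _; rewrite size_iota subn1 prednK.
Qed.

Lemma Xbar_formula s j : (0 < j)%N ->
  Xbar s j = (-1) ^+ (cnt s j).+1 * step s 1 * step s j.+1.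
Proof.
move=> j0; rewrite /Xbar.
under eq_bigr do rewrite tau_ind_eq //.
exact: (sum_ind (fun l => (-1) ^+ l.+1 * step s 1 * step s j.+1) (cnt_lt s j0)).
Qed.

Definition sig (s : nat -> int) j := (-1) ^+ (cnt s j) * step s 1.

Lemma Xbar_sig s j : (0 < j)%N -> Xbar s j = - sig s j * step s j.+1.
Proof. by move=> j0; rewrite Xbar_formula // /sig exprS mulN1r !mulNr. Qed.

Lemma CV0 s : CV s 0 = 0.
Proof. by rewrite /CV big_geq. Qed.

Lemma CVS s n : CV s n.+1 = CV s n + Xbar s n.+1.
Proof. by rewrite /CV big_nat_recr. Qed.

Lemma cnt_ext s s' n : (forall k, (k <= n)%N -> s k = s' k) -> cnt s n = cnt s' n.
Proof.
move=> H; apply: eq_in_count => i; rewrite mem_iota add0n => /andP[_ i_n].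
rewrite /cr !H //; case: i i_n => //= i; lia.
Qed.

Lemma Xbar_ext s s' j : (0 < j)%N -> (forall k, (k <= j.+1)%N -> s k = s' k) ->
  Xbar s j = Xbar s' j.
Proof.
move=> j0 H; rewrite !Xbar_formula //.
rewrite (@cnt_ext s s' j); last by move=> k kj; apply: H; exact: leq_trans kj _.
rewrite /step /= !H //; case: j j0 H => //= j _ H; lia.
Qed.

Lemma CV_ext s s' n : (forall k, (k <= n.+1)%N -> s k = s' k) -> CV s n = CV s' n.
Proof.
move=> H; rewrite /CV; apply: eq_big_nat => k /andP[k1 kn].
apply: Xbar_ext => // i ik; apply: H; exact: leq_trans ik kn.
Qed.

Lemma cnt_neg s n : cnt (fun k => - s k) n = cnt s n.
Proof. by apply: eq_count => i; rewrite /cr mulrNN. Qed.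

Lemma step_neg s i : step (fun k => - s k) i = - step s i.
Proof. by rewrite /step opprD. Qed.

Lemma Xbar_neg s j : (0 < j)%N -> Xbar (fun k => - s k) j = Xbar s j.
Proof.
move=> j0; rewrite !Xbar_formula // cnt_neg !step_neg.
by rewrite !mulrN !mulNr opprK.
Qed.

Lemma CV_neg s : CV (fun k => - s k) = CV s.
Proof.
apply: funext => n; rewrite /CV; apply: eq_big_nat => k /andP[k1 _].
exact: Xbar_neg.
Qed.

Lemma CV_inj s s' n : s 0%N = s' 0%N -> s 1%N = s' 1%N -> s 1%N != s 0%N ->
  (forall k, (k <= n)%N -> CV s k = CV s' k) -> forall k, (k <= n.+1)%N -> s k = s' k.
Proof.
move=> h0 h1 h10; elim: n => [|n IH] H k kn.
  by case: k kn => [|[|]] //.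
have IH' := IH (fun k kn => H k (leq_trans kn (leqnSn n))).
rewrite leq_eqVlt in kn; case/orP: kn => [/eqP -> | kn]; last by apply: IH'.
have eX : Xbar s n.+1 = Xbar s' n.+1.
  by apply: (@addrI _ (CV s n)); rewrite -CVS H // (H n (leqnSn n)) -CVS.
move: eX; rewrite !Xbar_sig //.
have -> : sig s n.+1 = sig s' n.+1.
  rewrite /sig (@cnt_ext s s' n.+1); last by move=> i ik; apply: IH'.
  by rewrite /step /= h0 h1.
move/(congr1 (fun x => - x)); rewrite -!mulNr opprK => /mulfI.
have nz : sig s' n.+1 != 0.
  rewrite /sig mulf_neq0 // ?expf_neq0 ?oppr_eq0 ?oner_eq0 // /step /= -h0 -h1 subr_eq0 //.
move/(_ nz); rewrite /step => e.
by rewrite -(subrK (s n.+1) (s n.+2)) e IH' // subrK.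
Qed.

Fixpoint stt (b : nat -> int) (j : nat) : int * int * int :=
  match j with
  | 0%N => (0, 1, 1)
  | j'.+1 => let: (a, c, p) := stt b j' in
      let c' := c - p * (b j'.+1 - b j') in
      (c, c', if a * c' < 0 then - p else p)
  end.

Definition Tinv (b : nat -> int) (n : nat) : int := (stt b n).1.1.

Lemma TinvS b n : Tinv b n.+1 = (stt b n).1.2.
Proof. by rewrite /Tinv /=; case: (stt b n) => [[a c] p]. Qed.

Lemma Tinv0 b : Tinv b 0 = 0. Proof. by []. Qed.
Lemma Tinv1 b : Tinv b 1 = 1. Proof. by []. Qed.

Lemma stt_p b n : (stt b n).2 = (-1) ^+ (cnt (Tinv b) n.+1).
Proof.
elim: n => [|n IH] //=.
rewrite cntS exprD -IH.
have e1 : Tinv b n.+2 = (stt b n).1.2 - (stt b n).2 * (b n.+1 - b n).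
  by rewrite TinvS /=; case: (stt b n) => [[a c] p].
rewrite /cr /= e1 /Tinv /=.
case: (stt b n) => [[a c] p] /=.
by case: ifP => _; rewrite ?expr1 ?expr0 ?mulrN1 ?mulr1.
Qed.

Lemma Tinv_step b n : Tinv b n.+2 = Tinv b n.+1 - (-1) ^+ (cnt (Tinv b) n.+1) * (b n.+1 - b n).
Proof.
rewrite -stt_p TinvS (TinvS b n) /=.
by case: (stt b n) => [[a c] p].
Qed.

Lemma sign_sq n : (-1) ^+ n * (-1) ^+ n = 1 :> int.
Proof. by rewrite -expr2 sqrr_sign. Qed.

Lemma Xbar_Tinv b n : Xbar (Tinv b) n.+1 = b n.+1 - b n.
Proof.
rewrite Xbar_sig // /sig /step Tinv_step /= Tinv1 Tinv0 subr0 mulr1.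
by rewrite addrAC subrr add0r mulrN mulNr opprK mulrA sign_sq mul1r.
Qed.

Lemma CV_Tinv b n : CV (Tinv b) n = b n - b 0%N.
Proof.
elim: n => [|n IH]; first by rewrite CV0 subrr.
by rewrite CVS IH Xbar_Tinv; lia.
Qed.

Lemma Tinv_srw b : srw_path b -> srw_path (Tinv b) /\ CV (Tinv b) = b.
Proof.
case=> b0 bs; split; last by apply: funext => n; rewrite CV_Tinv b0 subr0.
split => // -[|i] //; rewrite Tinv_step addrAC subrr add0r normrN normrM.
by rewrite normrX normrN1 expr1n mul1r bs.
Qed.

Lemma stt_ext b b' n : (forall k, (k <= n)%N -> b k = b' k) -> stt b n = stt b' n.
Proof.
elim: n => [|n IH] H //=.
rewrite IH; last by move=> k kn; apply: H; exact: leq_trans kn (leqnSn n).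
by rewrite !H // ltnW.
Qed.

Lemma Tinv_ext b b' n : (forall k, (k <= n)%N -> b k = b' k) -> Tinv b n = Tinv b' n.
Proof. by move=> H; rewrite /Tinv (stt_ext H). Qed.

Lemma sig1 s : sig s 1 = s 1%N - s 0%N.
Proof. by rewrite /sig cnt1 expr0 mul1r. Qed.

Lemma sigS s j : sig s j.+1 = (if cr s j then - sig s j else sig s j).
Proof. by rewrite /sig cntS exprD; case: (cr s j); rewrite ?expr1 ?expr0 ?mulrN1 ?mulr1 ?mulNr. Qed.

Lemma sig_inv s j : srw_path s -> (0 < j)%N ->
  [/\ (sig s j = 1 \/ sig s j = -1), 0 <= sig s j * s j & 0 <= sig s j * s j.-1].
Proof.
case=> s0 ss; elim: j => [|j IH] // _.
case: (posnP j) => [->|jp].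
  rewrite sig1 s0 subr0 /=; have := ss 0%N; rewrite s0 subr0 => h; split; nia.
have [h1 h2 h3] := IH jp; rewrite sigS /cr jp /=.
have e1 := ss j; have e2 := ss j.-1; rewrite prednK // in e2.
case: ifP => hc; case: h1 => h1; rewrite h1 in h2 h3 *; split; nia.
Qed.

Lemma Xbar_abs s j : srw_path s -> (0 < j)%N ->
  Xbar s j = `|s j| - `|s j.+1| + 2 * ((cr s j : nat)%:Z).
Proof.
move=> hs jp; have [h1 h2 h3] := sig_inv hs jp.
have e1 := hs.2 j; have e2 := hs.2 j.-1; rewrite prednK // in e2.
rewrite Xbar_sig // /step /cr jp /=.
case hc: (s j.-1 * s j.+1 < 0); case: h1 => h1; rewrite h1 in h2 h3 *; nia.
Qed.

Lemma cr_abs s j : srw_path s -> cr s j -> `|s j.+1| = 1.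
Proof.
move=> hs /andP[jp hc]; have e1 := hs.2 j; have e2 := hs.2 j.-1.
rewrite prednK // in e2; nia.
Qed.

Lemma CV_abs s n : srw_path s -> CV s n = 1 - `|s n.+1| + 2 * (cnt s n.+1)%:Z.
Proof.
move=> hs; elim: n => [|n IH].
  rewrite CV0 cnt1 mulr0 addr0; have := hs.2 0%N; rewrite hs.1 subr0; lia.
rewrite CVS IH Xbar_abs // (cntS s n.+1); lia.
Qed.

Lemma bigmax_le (I : eqType) (F : I -> int) x c (r : seq I) : x <= c ->
  (forall i, i \in r -> F i <= c) -> \big[Order.max/x]_(i <- r) F i <= c.
Proof.
move=> xc; elim: r => [|a r IH] H; first by rewrite big_nil.
rewrite big_cons ge_max H ?mem_head // IH // => i ir; apply: H.
by rewrite in_cons ir orbT.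
Qed.

Lemma le_bigmax (I : eqType) (F : I -> int) x (r : seq I) k : k \in r ->
  F k <= \big[Order.max/x]_(i <- r) F i.
Proof.
elim: r => [|a r IH] //; rewrite in_cons big_cons le_max => /orP[/eqP ->|kr].
  by rewrite lexx.
by rewrite IH ?orbT.
Qed.

Lemma max_witness s n : srw_path s -> exists2 k, (k <= n)%N & 2 * (cnt s n.+1)%:Z <= CV s k.
Proof.
move=> hs; elim: n => [|n [k kn IH]]; first by exists 0%N => //; rewrite CV0 cnt1.
have hS := cntS s n.+1; case hc: (cr s n.+1).
- exists n.+1 => //; rewrite (CV_abs n.+1 hs) (cr_abs hs hc) hS hc; lia.
- exists k; first exact: leq_trans kn (leqnSn n).
  by rewrite hS hc addn0.
Qed.

Lemma max_bounds s n : srw_path s ->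
  2 * (cnt s n.+1)%:Z <= \big[Order.max/CV s 0%N]_(k < n.+1) CV s k <= 1 + 2 * (cnt s n.+1)%:Z.
Proof.
move=> hs; apply/andP; split.
  have [k kn hk] := max_witness n hs.
  apply: le_trans hk _.
  exact: (@le_bigmax _ (fun k : 'I_n.+1 => CV s k) _ _ (Ordinal (n:=n.+1) (m:=k) kn) (mem_index_enum _)).
apply: bigmax_le.
  by rewrite CV0; lia.
move=> i _; rewrite (CV_abs i hs).
have := cnt_mono s (ltn_ord i); lia.
Qed.

Lemma Ybar_bound s n : srw_path s ->
  `| (\big[Order.max/CV s 0%N]_(k < n.+1) CV s k - CV s n) - `|s n| | <= 2.
Proof.
move=> hs; have := max_bounds n hs; have := CV_abs n hs; have := hs.2 n; lia.
Qed.



Section SA.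
Variables (T : Type) (G : set (set T)).
Hypothesis hG : sigma_algebra setT G.

Lemma sa0 : G set0. Proof. by case: hG. Qed.
Lemma saC A : G A -> G (~` A). Proof. by case: hG => _ h _ /h; rewrite setTD. Qed.
Lemma saT : G setT. Proof. by rewrite -setC0; apply: saC; exact: sa0. Qed.
Lemma saUn (F : nat -> set T) : (forall n, G (F n)) -> G (\bigcup_n F n).
Proof. by case: hG => _ _; apply. Qed.
Lemma saU A B : G A -> G B -> G (A `|` B).
Proof.
move=> hA hB; have -> : A `|` B = \bigcup_n (if n is 0%N then A else B).
  apply/seteqP; split => x.
    by case=> h; [exists 0%N | exists 1%N].
  by case=> -[|n] _ h; [left|right].
by apply: saUn => -[|n].
Qed.
Lemma saI A B : G A -> G B -> G (A `&` B).
Proof.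
move=> hA hB; rewrite -(setCK (A `&` B)) setCI; apply: saC.
by apply: saU; apply: saC.
Qed.
Lemma saUint (F : int -> set T) : (forall v, G (F v)) -> G [set x | exists v, F v x].
Proof.
move=> hF; have -> : [set x | exists v, F v x] =
    (\bigcup_n F (Posz n)) `|` (\bigcup_n F (Negz n)).
  apply/seteqP; split => x.
    by case=> -[n|n] h; [left|right]; exists n.
  by case=> -[n _ h]; eexists; exact: h.
by apply: saU; apply: saUn.
Qed.

Lemma fin_meas (Y : nat -> T -> int) m (F : (nat -> int) -> Prop) :
  (forall k B, (k < m)%N -> G (Y k @^-1` B)) ->
  (forall y y', (forall k, (k < m)%N -> y k = y' k) -> F y -> F y') ->
  G [set w | F (fun k => Y k w)].
Proof.
elim: m F => [|m IH] F hY hF.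
  case: (pselect (F (fun _ => 0))) => h.
    have -> : [set w | F (fun k => Y k w)] = setT.
      by apply/seteqP; split => // w _; apply: hF h.
    exact: saT.
  have -> : [set w | F (fun k => Y k w)] = set0.
    by apply/seteqP; split => // w /= hw; apply: h; apply: hF hw.
  exact: sa0.
have -> : [set w | F (fun k => Y k w)] = [set w | exists v,
   (Y m @^-1` [set v] `&` [set w | F (fun k => if k == m then v else Y k w)]) w].
  apply/seteqP; split => w /=.
    move=> h; exists (Y m w); split => //.
    by apply: hF h => k _; case: eqP => // ->.
  case=> v [/= <- h]; apply: hF h => k _; by case: eqP => // ->.
apply: saUint => v; apply: saI; first exact: hY.
apply: (IH (fun y => F (fun k => if k == m then v else y k))).
  by move=> k B km; apply: hY; exact: ltnW.
move=> y y' hyy'; apply: hF => k km1; case: eqP => // /eqP km.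
apply: hyy'; lia.
Qed.
End SA.

Definition dep (m : nat) (F : (nat -> int) -> Prop) :=
  forall y y', (forall k, (k < m)%N -> y k = y' k) -> F y -> F y'.

Definition pm1 (x : int) : bool := (x == 1) || (x == -1).

Fixpoint signs (m : nat) : seq (seq int) :=
  if m is m'.+1 then [seq 1 :: t | t <- signs m'] ++ [seq -1 :: t | t <- signs m']
  else [:: [::]].

Lemma mem_signs m e : (e \in signs m) = (size e == m) && all pm1 e.
Proof.
elim: m e => [|m IH] e.
  by rewrite /= inE; case: e.
case: e => [|x e].
  by rewrite /= mem_cat; apply/negbTE; rewrite negb_or; apply/andP; split;
    apply/negP => /mapP [].
rewrite /= mem_cat eqSS; apply/idP/idP.
  by case/orP => /mapP [t ht [-> ->]]; rewrite -IH ht.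
case/andP => he1 /andP[hx ha]; case/orP: hx => /eqP ->.
  by apply/orP; left; apply/mapP; exists e => //; rewrite IH he1 ha.
by apply/orP; right; apply/mapP; exists e => //; rewrite IH he1 ha.
Qed.

Lemma uniq_signs m : uniq (signs m).
Proof.
elim: m => [|m IH] //=; rewrite cat_uniq !map_inj_uniq // ?IH ?andbT; last 2 first.
  by move=> x y [].
  by move=> x y [].
apply/hasPn => x /mapP [t _ ->]; apply/mapP => -[u _ []].
lia.
Qed.

Lemma perm_signs_neg m : perm_eq (map (map -%R) (signs m)) (signs m).
Proof.
elim: m => [|m IH] //=; rewrite map_cat -!map_comp.
have e1 : map (map -%R \o cons 1) (signs m) = map (cons (-1)) (map (map -%R) (signs m)).
  by rewrite -map_comp.
have e2 : map (map -%R \o cons (-1)) (signs m) = map (cons 1) (map (map -%R) (signs m)).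
  by rewrite -map_comp; apply: eq_map => t /=; rewrite opprK.
rewrite e1 e2 perm_catC; apply: perm_cat; exact: perm_map.
Qed.

Lemma nth_signs m e i : e \in signs m -> (i < m)%N -> pm1 (nth 0 e i).
Proof.
rewrite mem_signs => /andP[/eqP <- /allP h] hi; apply: h; exact: mem_nth.
Qed.

Section ProbSec.
Context {d : measure_display} {Omega : measurableType d} {R : realType}.
Variable P : probability Omega R.

Definition Xs (S : nat -> Omega -> int) (i : nat) (w : Omega) : int := S i.+1 w - S i w.
Definition atom (X : nat -> Omega -> int) m (e : seq int) : set Omega :=
  [set w | forall i, (i < m)%N -> X i w = nth 0 e i].
Definition pmX (X : nat -> Omega -> int) :=
  (forall i w, X i w = 1 \/ X i w = -1) /\ (forall i, int_rv (X i)).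
Definition qq m : \bar R := (((2:R)^-1) ^+ m)%:E.
Definition unif (X : nat -> Omega -> int) :=
  forall m e, e \in signs m -> P (atom X m e) = qq m.

Lemma meas_fin (Y : nat -> Omega -> int) m F : (forall k, int_rv (Y k)) -> dep m F ->
  measurable [set w | F (fun k => Y k w)].
Proof.
move=> hY hF; apply: (fin_meas (sigma_algebra_measurable _) _ hF).
by move=> k B _; apply: hY.
Qed.

Local Open Scope ereal_scope.

Lemma measure_disj (r : seq (seq int)) (Pr : pred (seq int)) (A : seq int -> set Omega) :
  uniq r -> (forall i, measurable (A i)) ->
  (forall i j, i \in r -> j \in r -> i != j -> forall w, A i w -> A j w -> False) ->
  measurable [set w | exists2 i, (i \in r) && Pr i & A i w] /\
  P [set w | exists2 i, (i \in r) && Pr i & A i w] = \sum_(i <- r | Pr i) P (A i).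
Proof.
elim: r => [|a r IH] /= uq mA hd.
  have -> : [set w | exists2 i, (i \in [::]) && Pr i & A i w] = set0.
    by apply/seteqP; split => // w [].
  by rewrite big_nil measure0.
case/andP: uq => ar ur.
have sub : forall i, i \in r -> i \in a :: r by move=> i ir; rewrite inE ir orbT.
have [IH1 IH2] := IH ur mA (fun i j ir jr => hd i j (sub i ir) (sub j jr)).
rewrite big_cons; case: ifP => pa.
- have -> : [set w | exists2 i, (i \in a :: r) && Pr i & A i w] =
     A a `|` [set w | exists2 i, (i \in r) && Pr i & A i w].
    apply/seteqP; split => w.
      case=> i /andP [/[!inE] /orP[/eqP ->|ir] pi] h; first by left.
      by right; exists i => //; rewrite ir pi.
    case=> [h|[i /andP[ir pi] h]]; first by exists a => //; rewrite mem_head pa.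
    by exists i => //; rewrite inE ir orbT pi.
  split; first exact: measurableU.
  rewrite measureU // -?IH2 //; apply/seteqP; split => // w [h1 [i /andP[ir _] h2]].
  apply: (hd a i (mem_head _ _) (sub i ir) _ w h1 h2).
  by apply: contraNneq ar => ->.
- have -> : [set w | exists2 i, (i \in a :: r) && Pr i & A i w] =
     [set w | exists2 i, (i \in r) && Pr i & A i w].
    apply/seteqP; split => w.
      case=> i /andP [/[!inE] /orP[/eqP ->|ir] pi] h; first by rewrite pa in pi.
      by exists i => //; rewrite ir pi.
    by case=> i /andP[ir pi] h; exists i => //; rewrite inE ir orbT pi.
  by split.
Qed.

Local Close Scope ereal_scope.

Lemma atom_meas X m e : pmX X -> measurable (atom X m e).
Proof.
move=> [_ hX]; have hd : dep m (fun y => forall i, (i < m)%N -> y i = nth 0 e i).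
  by move=> y y' hy h i im; rewrite -hy // h.
exact: (@meas_fin X m _ hX hd).
Qed.

Lemma law X m F : pmX X -> unif X -> dep m F ->
  P [set w | F (fun k => X k w)] = (\sum_(e <- signs m | `[< F (nth 0%R e) >]) qq m)%E.
Proof.
move=> hX hu hF.
have e1 : [set w | F (fun k => X k w)] =
   [set w | exists2 e, (e \in signs m) && `[< F (nth 0 e) >] & atom X m e w].
  apply/seteqP; split => w /=.
    move=> hw; exists (mkseq (fun i => X i w) m).
      rewrite mem_signs size_mkseq eqxx /=; apply/andP; split.
        apply/allP => x /mapP [i _ ->]; rewrite /pm1.
        by case: (hX.1 i w) => ->; rewrite eqxx ?orbT.
      by apply/asboolP; apply: hF hw => k km; rewrite nth_mkseq.
    by move=> i im; rewrite nth_mkseq.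
  case=> e /andP[_ /asboolP hF'] ha; apply: hF hF' => k km.
  by rewrite ha.
have hdisj : forall e e', e \in signs m -> e' \in signs m -> e != e' ->
    forall w, atom X m e w -> atom X m e' w -> False.
  move=> e e' he he' hne w h h'; move/negP: hne; apply; apply/eqP.
  move: he he'; rewrite !mem_signs => /andP[/eqP se _] /andP[/eqP se' _].
  apply: (@eq_from_nth _ 0); first by rewrite se se'.
  by move=> i; rewrite se => im; rewrite -h // -h'.
rewrite e1; have [_ H] := @measure_disj (signs m) (fun e => `[< F (nth 0 e) >])
    (atom X m) (uniq_signs m) (fun e => atom_meas m e hX) hdisj.
apply: (etrans H); rewrite big_seq_cond [in RHS]big_seq_cond.
by apply: eq_bigr => e /andP[he _]; exact: hu.
Qed.

Lemma prod_const (r : seq nat) (c : R) :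
  \big[*%E/1%E]_(j <- r) c%:E = (c ^+ size r)%:E.
Proof.
elim: r => [|a r IH]; first by rewrite big_nil expr0.
by rewrite big_cons IH /= exprS EFinM.
Qed.

Lemma rademacher_neg (Y : Omega -> int) : rademacher P Y ->
  P (Y @^-1` [set -1%R]) = (2^-1)%:E.
Proof.
case=> hm [hv h1].
have mA : measurable (Y @^-1` [set 1%R]) by apply: hm.
have -> : Y @^-1` [set -1%R] = ~` (Y @^-1` [set 1%R]).
  apply/seteqP; split => w; rewrite /preimage /=.
    by move=> ->; lia.
  by case: (hv w).
rewrite probability_setC // h1 -EFinB; by congr (_%:E); field.
Qed.

Lemma SRW_pm S : SRW P S -> pmX (Xs S).
Proof.
case=> _ _ hr _; split; first by move=> i w; case: (hr i) => _ [h _]; exact: h.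
by move=> i; case: (hr i).
Qed.

Lemma SRW_path S w : SRW P S -> srw_path (fun k => S k w).
Proof.
move=> hS; have [h _] := SRW_pm hS; case: hS => h0 _ _ _; split => // i.
by case: (h i w); rewrite /Xs => ->.
Qed.

Lemma SRW_unif S : SRW P S -> unif (Xs S).
Proof.
move=> hS m e he; case: hS => _ _ hr hi.
have -> : atom (Xs S) m e = [set w | forall j, j \in iota 0 m -> [set nth 0%R e j] (Xs S j w)].
  apply/seteqP; split => w /= h j.
    by rewrite mem_iota add0n => /andP[_ hj]; exact: h.
  by move=> hj; apply: h; rewrite mem_iota add0n.
rewrite (hi (iota 0 m) (fun j => [set nth 0%R e j]) (iota_uniq 0 m)).
rewrite big_seq (eq_bigr (fun _ => (2^-1 : R)%:E)); last first.
  move=> j; rewrite mem_iota add0n => hj.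
  have := nth_signs he hj; rewrite /pm1 => /orP[/eqP ->|/eqP ->].
    by case: (hr j) => _ [_ ->].
  exact: (rademacher_neg (hr j)).
by rewrite -big_seq prod_const size_iota.
Qed.

Lemma law_eq X X' m F : pmX X -> unif X -> pmX X' -> unif X' -> dep m F ->
  P [set w | F (fun k => X k w)] = P [set w | F (fun k => X' k w)].
Proof. by move=> h1 h2 h3 h4 h5; rewrite (law h1 h2 h5) (law h3 h4 h5). Qed.

Lemma SRW_of_law S Sb : SRW P Sb -> (forall w, S 0%N w = 0%R) -> (forall n, int_rv (S n)) ->
  pmX (Xs S) -> unif (Xs S) -> SRW P S.
Proof.
move=> hSb h0 hm hp hu.
have hpb := SRW_pm hSb; have hub := SRW_unif hSb.
split => // i.
- split; first exact: hp.2.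
  split; first exact: hp.1.
  have hd : dep i.+1 (fun y => y i = 1%R) by move=> y y' hy <-; rewrite hy.
  have := law_eq hp hu hpb hub hd; rewrite /Xs => ->.
  by case: hSb => _ _ hr _; case: (hr i) => _ [_ ->].
- rename i into J; move=> B uJ.
  pose m := (\max_(j <- J) j).+1.
  have hJ : forall j, j \in J -> (j < m)%N.
    by move=> j jJ; rewrite ltnS; apply: (@leq_bigmax_seq _ _ _ (fun j => j)).
  have hd : dep m (fun y => forall j, j \in J -> B j (y j)).
    by move=> y y' hy h j jJ; rewrite -hy ?hJ //; apply: h.
  have := law_eq hp hu hpb hub hd; rewrite /Xs => ->.
  case: hSb => _ _ _ hi; rewrite (hi J B uJ) big_seq [in RHS]big_seq.
  apply: eq_bigr => j jJ.
  have hd' : dep j.+1 (fun y => B j (y j)) by move=> y y' hy; rewrite hy.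
  by have := law_eq hpb hub hp hu hd'.
Qed.

Lemma CV_dep (j : nat) (m : nat) (B : set int) : (j.+1 < m)%N ->
  dep m (fun y => B (CV y j)).
Proof.
move=> jm y y' hy; rewrite (@CV_ext y y' j) // => k kj; apply: hy.
exact: leq_ltn_trans kj jm.
Qed.

Lemma part1i S n : SRW P S ->
  sjoin (sigma_rv (Tproc S) [set j | (j <= n)%N]) (sigma_rv (fun _ => S 1%N) setT)
  = sigma_rv S [set j | (j <= n.+1)%N].
Proof.
move=> hS; have hsa := @smallest_sigma_algebra Omega setT.
apply/seteqP; split.
- apply: smallest_sub; first exact: hsa.
  have hY : forall k B, (k < n.+2)%N -> sigma_rv S [set j | (j <= n.+1)%N] (S k @^-1` B).
    by move=> k B kn; apply: sub_sigma_algebra; exists k, B.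
  move=> A [hA|hA].
  + move: A hA; apply: smallest_sub; first exact: hsa.
    move=> A [j [B [/= jn ->]]].
    exact: (@fin_meas _ _ (hsa _) S n.+2 (fun y => B (CV y j)) hY (@CV_dep j n.+2 B (jn : (j < n.+1)%N))).
  + move: A hA; apply: smallest_sub; first exact: hsa.
    by move=> A [j [B [_ ->]]]; apply: hY.
- apply: smallest_sub; first exact: hsa.
  move=> A [j [B [/= jn ->]]].
  pose Y k := if k is k'.+1 then Tproc S k' else S 1%N.
  pose F := fun y : nat -> int => exists s, [/\ srw_path s, s 1%N = y 0%N,
     (forall k, (k <= n)%N -> CV s k = y k.+1) & B (s j)].
  have hd : dep n.+2 F.
    move=> y y' hy [s [h1 h2 h3 h4]]; exists s; split => //.
      by rewrite h2 hy.
    by move=> k kn; rewrite h3 // hy.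
  have hY : forall k B', (k < n.+2)%N -> sjoin (sigma_rv (Tproc S) [set j | (j <= n)%N])
      (sigma_rv (fun _ => S 1%N) setT) (Y k @^-1` B').
    move=> [|k] B' kn; apply: sub_sigma_algebra.
      by right; apply: sub_sigma_algebra; exists 0%N, B'.
    by left; apply: sub_sigma_algebra; exists k, B'.
  have -> : S j @^-1` B = [set w | F (fun k => Y k w)].
    apply/seteqP; split => w /=.
      move=> hb; exists (fun k => S k w); split => //; exact: SRW_path.
    case=> s [h1 h2 h3 h4].
    have hw := SRW_path w hS.
    rewrite -(@CV_inj s (fun k => S k w) n) //.
    + by rewrite h1.1 hw.1.
    + by rewrite h1.1; apply/eqP => h; have := h1.2 0%N; rewrite h h1.1 subrr normr0.
  exact: (fin_meas (hsa _) hY hd).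
Qed.

Definition pathOf (y : nat -> int) (k : nat) : int := \sum_(i < k) y i.

Lemma S_pathOf S w : S 0%N w = 0%R -> (fun k => S k w) = pathOf (fun i => Xs S i w).
Proof.
move=> h0; apply: funext => k; elim: k => [|k IH]; first by rewrite h0 /pathOf big_ord0.
by rewrite /pathOf in IH *; rewrite big_ord_recr /= -IH /Xs addrC subrK.
Qed.

Lemma pathOf_ext y y' m : (forall i, (i < m)%N -> y i = y' i) ->
  forall k, (k <= m)%N -> pathOf y k = pathOf y' k.
Proof.
move=> h k km; apply: eq_bigr => i _; apply: h; exact: leq_trans (ltn_ord i) km.
Qed.

Lemma pathOf_neg y : pathOf (fun i => - y i) = (fun k => - pathOf y k).
Proof. by apply: funext => k; rewrite /pathOf sumrN. Qed.

Lemma nth_neg (e : seq int) : nth 0%R (map -%R e) = (fun i => - nth 0%R e i).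
Proof. by apply: funext => i; elim: e i => [|x e IH] [|i] //=; rewrite oppr0. Qed.

Lemma Tb_rv S k : SRW P S -> int_rv (Tproc S k).
Proof.
move=> hS B; case: (hS) => _ hm _ _.
exact: (@meas_fin S k.+2 (fun y => B (CV y k)) hm (@CV_dep k k.+2 B (ltnSn _))).
Qed.

Lemma sym_half S m F (c : int) : SRW P S -> dep m F ->
  P ([set w | F (fun k => Tproc S k w)] `&` [set w | Xs S 0 w = c]) =
  (\sum_(e <- signs m.+1 | `[< F (fun k => CV (pathOf (nth 0%R e)) k) /\ nth 0%R e 0%N = c >]) qq m.+1)%E.
Proof.
move=> hS hF.
pose G := fun y => F (fun k => CV (pathOf y) k) /\ y 0%N = c.
have hG : dep m.+1 G.
  move=> y y' hy [h1 h2]; split; last by rewrite -hy.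
  apply: hF h1 => k km; apply: CV_ext => i ik; apply: (pathOf_ext hy).
  exact: leq_trans (leq_trans ik km) (leqnSn m).
have -> : [set w | F (fun k => Tproc S k w)] `&` [set w | Xs S 0 w = c] =
    [set w | G (fun k => Xs S k w)].
  have h0 : forall w, S 0%N w = 0%R by case: hS.
  apply/seteqP; split => w /=;
  have -> : (fun k => Tproc S k w) = (fun k => CV (pathOf (fun i => Xs S i w)) k)
    by apply: funext => k; rewrite /Tproc (S_pathOf (h0 w)).
    by [].
  by [].
exact: (law (SRW_pm hS) (SRW_unif hS) hG).
Qed.

Lemma sym_eq S m F : SRW P S -> dep m F ->
  P ([set w | F (fun k => Tproc S k w)] `&` [set w | Xs S 0 w = 1%R]) =
  P ([set w | F (fun k => Tproc S k w)] `&` [set w | Xs S 0 w = -1%R]).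
Proof.
move=> hS hF; rewrite (sym_half 1%R hS hF) (sym_half (-1)%R hS hF).
rewrite -(perm_big _ (perm_signs_neg m.+1)) big_map; apply: eq_bigl => e.
rewrite nth_neg pathOf_neg CV_neg.
apply/idP/idP => /asboolP [h1 h2]; apply/asboolP; split => //; lia.
Qed.

Lemma half_fin (x : \bar R) : x \is a fin_num -> x = ((2^-1)%:E * (x + x))%E.
Proof.
move=> hx; rewrite -(fineK hx) -EFinD -EFinM; by congr (_%:E); field.
Qed.

Lemma cyl_indep S m F (B : set int) : SRW P S -> dep m F ->
  P ([set w | F (fun k => Tproc S k w)] `&` (S 1%N @^-1` B)) =
  (P (S 1%N @^-1` B) * P [set w | F (fun k => Tproc S k w)])%E.
Proof.
move=> hS hF; set A := [set w | F (fun k => Tproc S k w)].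
have [hv hrv] := SRW_pm hS.
have h0 : forall w, S 0%N w = 0%R by case: hS.
have S1 : forall w, S 1%N w = Xs S 0 w by move=> w; rewrite /Xs h0 subr0.
have mA : measurable A.
  exact: (@meas_fin (Tproc S) m F (fun k => Tb_rv k hS) hF).
have mX1 : measurable [set w | Xs S 0 w = 1%R] by exact: (hrv 0%N [set 1%R]).
have mX2 : measurable [set w | Xs S 0 w = (-1)%R] by exact: (hrv 0%N [set (-1)%R]).
have hsym := sym_eq hS hF.
have hsum : P A = (P (A `&` [set w | Xs S 0 w = 1%R]) + P (A `&` [set w | Xs S 0 w = (-1)%R]))%E.
  have eA : A = (A `&` [set w | Xs S 0 w = 1%R]) `|` (A `&` [set w | Xs S 0 w = (-1)%R]) :> set _.
    apply/seteqP; split => w /=.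
      by move=> hw; case: (hv 0%N w) => h; [left|right].
    by case=> -[].
  rewrite {1}eA measureU //; try exact: measurableI.
  apply/seteqP; split => // w [[_ h1] [_ h2]]; move: h1 h2 => /= h1 h2.
  rewrite h1 in h2; lia.
have p1 : P [set w | Xs S 0 w = 1%R] = (2^-1)%:E.
  by case: hS => _ _ hr _; case: (hr 0%N) => _ [_ h].
have p2 : P [set w | Xs S 0 w = (-1)%R] = (2^-1)%:E.
  by case: hS => _ _ hr _; exact: (rademacher_neg (hr 0%N)).
have fin1 : P (A `&` [set w | Xs S 0 w = 1%R]) \is a fin_num.
  by apply: fin_num_measure; exact: measurableI.
have fin2 : P (A `&` [set w | Xs S 0 w = (-1)%R]) \is a fin_num.
  by apply: fin_num_measure; exact: measurableI.
case: (pselect (B 1%R)) => b1; case: (pselect (B (-1)%R)) => b2.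
- have -> : S 1%N @^-1` B = setT.
    by apply/seteqP; split => // w _; rewrite /preimage /= S1; case: (hv 0%N w) => ->.
  by rewrite setIT probability_setT mul1e.
- have -> : S 1%N @^-1` B = [set w | Xs S 0 w = 1%R].
    apply/seteqP; split => w; rewrite /preimage /= S1; last by move=> ->.
    by case: (hv 0%N w) => -> //.
  by rewrite p1 hsum -hsym; apply: half_fin.
- have -> : S 1%N @^-1` B = [set w | Xs S 0 w = (-1)%R].
    apply/seteqP; split => w; rewrite /preimage /= S1; last by move=> ->.
    by case: (hv 0%N w) => -> //.
  by rewrite p2 hsum hsym; apply: half_fin.
- have -> : S 1%N @^-1` B = set0.
    apply/seteqP; split => // w; rewrite /preimage /= S1.
    by case: (hv 0%N w) => ->.
  by rewrite setI0 measure0 mul0e.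
Qed.

Lemma part1ii S : SRW P S -> indep_rv_sigma P (S 1%N) (sigma_rv (Tproc S) setT).
Proof.
move=> hS B A hA.
set C := S 1%N @^-1` B.
have mC : measurable C by case: hS => _ hm _ _; exact: hm.
pose Cyl := [set A : set Omega | exists m F, dep m F /\ A = [set w | F (fun k => Tproc S k w)]].
have CylM : Cyl `<=` measurable.
  move=> _ [m [F [hF ->]]]; exact: (@meas_fin (Tproc S) m F (fun k => Tb_rv k hS) hF).
have CylT : Cyl setT.
  by exists 0%N, (fun _ => True); split.
have CylI : setI_closed Cyl.
  move=> _ _ [m1 [F1 [h1 ->]]] [m2 [F2 [h2 ->]]].
  exists (maxn m1 m2), (fun y => F1 y /\ F2 y); split.
    move=> y y' hy [a b]; split.
      by apply: h1 a => k km; apply: hy; exact: leq_trans km (leq_maxl _ _).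
    by apply: h2 b => k km; apply: hy; exact: leq_trans km (leq_maxr _ _).
  by [].
have hA' : <<s Cyl >> A.
  move: A hA; apply: smallest_sub; first exact: smallest_sigma_algebra.
  move=> _ [j [B' [_ ->]]]; apply: sub_sigma_algebra.
  exists j.+1, (fun y => B' (y j)); split; first by move=> y y' hy; rewrite hy.
  by [].
pose r := NngNum (fine_ge0 (measure_ge0 P C)).
have hfin : P C \is a fin_num by exact: fin_num_measure.
have := @g_sigma_algebra_measure_unique _ _ _ Cyl CylM (fun _ => setT) (fun _ => CylT)
  (bigcup_const _ _) (mrestr P mC) (mscale r P) CylI.
have m1m2 : forall A, Cyl A -> mrestr P mC A = mscale r P A.
  move=> _ [m [F [hF ->]]]; rewrite /mrestr /mscale /= fineK //.
  have h := cyl_indep B hS hF. exact: h.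
have m1goo : forall k : nat, (mrestr P mC setT < +oo)%E.
  move=> _; rewrite /mrestr setTI; apply: (le_lt_trans (probability_le1 P mC)); exact: ltry.
have ne : [set: nat] !=set0 by exists 0%N.
move=> /(_ ne m1m2 m1goo A hA') h.
have h' : P (A `&` C) = ((fine (P C))%:E * P A)%E := h.
by rewrite setIC h' fineK.
Qed.

Lemma path_diff (u v : nat -> int) m : u 0%N = v 0%N ->
  (forall k, (k <= m)%N -> u k = v k) <-> (forall i, (i < m)%N -> u i.+1 - u i = v i.+1 - v i).
Proof.
move=> h0; split => h.
  by move=> i im; rewrite !h // ltnW.
elim=> [|k IH] // km.
have := h k km; rewrite IH ?(ltnW km) // => e.
by rewrite -(subrK (v k) (u k.+1)) e subrK.
Qed.

Lemma pathOf_step x i : pathOf x i.+1 - pathOf x i = x i.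
Proof. by rewrite /pathOf big_ord_recr /= addrAC subrr add0r. Qed.

Lemma pathOf0 x : pathOf x 0 = 0. Proof. by rewrite /pathOf big_ord0. Qed.

Definition Sdef (Sb : nat -> Omega -> int) (eps : Omega -> int) n w : int :=
  eps w * Tinv (fun k => Sb k w) n.

Lemma Sdef_path Sb eps w : srw_path (fun k => Sb k w) -> (eps w = 1 \/ eps w = -1) ->
  [/\ srw_path (fun k => Sdef Sb eps k w), Sdef Sb eps 1%N w = eps w &
      CV (fun k => Sdef Sb eps k w) = (fun k => Sb k w)].
Proof.
move=> hb he; have [ht hc] := Tinv_srw hb; rewrite /Sdef.
split.
- split; first by rewrite Tinv0 mulr0.
  by move=> i; rewrite -mulrBr normrM ht.2; case: he => ->; rewrite ?normrN normr1.
- by rewrite Tinv1 mulr1.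
- case: he => ->.
    have -> : (fun k => 1 * Tinv (fun k => Sb k w) k) = Tinv (fun k => Sb k w).
      by apply: funext => k; rewrite mul1r.
    exact: hc.
  have -> : (fun k => -1 * Tinv (fun k => Sb k w) k) = (fun k => - Tinv (fun k => Sb k w) k).
    by apply: funext => k; rewrite mulN1r.
  by rewrite CV_neg.
Qed.

Definition Yc (Sb : nat -> Omega -> int) (eps : Omega -> int) (k : nat) : Omega -> int :=
  if k is k'.+1 then Sb k' else eps.

Lemma Yc_rv Sb eps : SRW P Sb -> int_rv eps -> forall k, int_rv (Yc Sb eps k).
Proof. by move=> hS he [|k] //=; case: hS => _ hm _ _; exact: hm. Qed.

Lemma Sdef_rv Sb eps n : SRW P Sb -> int_rv eps -> int_rv (Sdef Sb eps n).
Proof.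
move=> hS he B.
have hd : dep n.+2 (fun y => B (y 0%N * Tinv (fun k => y k.+1) n)).
  move=> y y' hy; rewrite hy // (@Tinv_ext _ (fun k => y' k.+1) n) //.
  by move=> k kn; apply: hy; rewrite ltnS ltnS.
exact: (@meas_fin (Yc Sb eps) n.+2 _ (Yc_rv hS he) hd).
Qed.

Lemma Xs_Sdef_rv Sb eps i : SRW P Sb -> int_rv eps -> int_rv (Xs (Sdef Sb eps) i).
Proof.
move=> hS he B.
have hd : dep i.+3 (fun y => B (y 0%N * Tinv (fun k => y k.+1) i.+1 - y 0%N * Tinv (fun k => y k.+1) i)).
  move=> y y' hy; rewrite hy // (@Tinv_ext _ (fun k => y' k.+1) i.+1) //.
    rewrite (@Tinv_ext _ (fun k => y' k.+1) i) //.
    by move=> k kn; apply: hy; rewrite ltnS ltnS; exact: leq_trans kn (leqnSn _).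
  by move=> k kn; apply: hy; rewrite ltnS ltnS.
exact: (@meas_fin (Yc Sb eps) i.+3 _ (Yc_rv hS he) hd).
Qed.

Lemma pm1_norm (v : int) : `|v| = 1 -> pm1 v.
Proof. by rewrite /pm1 => h; case: (ltrP v 0) => hv; [have -> : v = -1 by lia|have -> : v = 1 by lia];
  rewrite eqxx ?orbT. Qed.

Lemma Sdef_unif Sb eps : SRW P Sb -> rademacher P eps ->
  indep_rv_sigma P eps (sigma_rv Sb setT) -> unif (Xs (Sdef Sb eps)).
Proof.
move=> hS he hi [|m'] e he'.
  have -> : atom (Xs (Sdef Sb eps)) 0 e = setT.
    by apply: funext => w; apply: propext; split => // _ i; rewrite ltn0.
  by rewrite probability_setT /qq expr0.
set Sd := Sdef Sb eps.
set x := nth 0%R e; set s := pathOf x; set c := CV s.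
have hx0 : pm1 (x 0%N) := nth_signs he' (ltn0Sn _).
have hev : forall w, eps w = 1 \/ eps w = -1 by case: he => _ [].
have hb : forall w, srw_path (fun k => Sb k w) by move=> w; exact: SRW_path.
have hs0 : s 0%N = 0 by rewrite /s pathOf0.
have hs1 : s 1%N = x 0%N by rewrite -(pathOf_step x 0) -/s hs0 subr0.
have key : atom (Xs Sd) m'.+1 e = eps @^-1` [set x 0%N] `&` [set w | forall k, (k <= m')%N -> Sb k w = c k].
  apply/seteqP; split => w.
  - move=> ha; have [hp h1 hc] := Sdef_path (hb w) (hev w).
    have hk : forall k, (k <= m'.+1)%N -> Sd k w = s k.
      have h00 : Sd 0%N w = s 0%N by rewrite hs0; exact: hp.1.
      have [_] := @path_diff (fun k => Sd k w) s m'.+1 h00; apply.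
      by move=> i im; rewrite /s pathOf_step; exact: ha.
    split; first by rewrite /= -h1 -/Sd hk // hs1.
    move=> k km /=; have := congr1 (fun f => f k) hc => /= <-.
    apply: CV_ext => i ik; apply: hk; exact: leq_trans ik (km : (k.+1 <= m'.+1)%N).
  - case=> /= e0 hD; have [hp h1 hc] := Sdef_path (hb w) (hev w).
    have hk := @CV_inj s (fun k => Sd k w) m'.
    have hk' : forall k, (k <= m'.+1)%N -> Sd k w = s k.
      move=> k kk; symmetry; apply: hk kk.
      + by rewrite hs0 /= /Sd; symmetry; exact: hp.1.
      + by rewrite hs1 /= /Sd h1 e0.
      + by rewrite hs1 hs0; move: hx0; rewrite /pm1 => /orP[/eqP ->|/eqP ->].
      + by move=> j jm; rewrite /= -/c -hD //; have := congr1 (fun f => f j) hc.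
    move=> i im; rewrite /Xs (hk' i.+1) // (hk' i) ?(ltnW im) //.
    by rewrite /s pathOf_step.
rewrite key.
have hdep : dep m'.+1 (fun y => forall k, (k <= m')%N -> y k = c k).
  by move=> y y' hy h k km; rewrite -hy ?ltnS // h.
have hD : sigma_rv Sb setT [set w | forall k, (k <= m')%N -> Sb k w = c k].
  apply: (fin_meas (@smallest_sigma_algebra _ _ _) _ hdep).
  by move=> k B _; apply: sub_sigma_algebra; exists k, B.
rewrite (hi _ _ hD).
have pe : P (eps @^-1` [set x 0%N]) = (2^-1)%:E.
  move: hx0; rewrite /pm1 => /orP[/eqP ->|/eqP ->].
    by case: he => _ [_ ->].
  exact: rademacher_neg.
set e2 := mkseq (fun i => c i.+1 - c i) m'.
have he2 : e2 \in signs m'.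
  rewrite mem_signs size_mkseq eqxx /=; apply/allP => v /mapP [i]; rewrite mem_iota add0n => /andP[_ im] ->.
  apply: pm1_norm; rewrite /c CVS addrC addKr Xbar_sig // /sig /step /= hs1 hs0 subr0.
  rewrite /s pathOf_step normrM normrN normrM normrX normrN1 expr1n mul1r.
  have := nth_signs he' (ltn0Sn m'); have := nth_signs he' (im : (i.+1 < m'.+1)%N).
  by rewrite /x /pm1 => /orP[/eqP ->|/eqP ->] /orP[/eqP ->|/eqP ->].
have -> : [set w | forall k, (k <= m')%N -> Sb k w = c k] = atom (Xs Sb) m' e2.
  apply/seteqP; split => w.
  - move=> h i im; rewrite /e2 nth_mkseq // /Xs !h //; exact: ltnW.
  - move=> h; have h00 : Sb 0%N w = c 0%N by rewrite /c CV0; case: hS => ->.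
    have [_] := @path_diff (fun k => Sb k w) c m' h00; apply.
    by move=> i im /=; have := h i im; rewrite /Xs /e2 nth_mkseq.
rewrite (SRW_unif hS he2) pe /qq -EFinM exprS.
by [].
Qed.


Lemma part2 Sb eps : SRW P Sb -> rademacher P eps -> indep_rv_sigma P eps (sigma_rv Sb setT) ->
     exists S : nat -> Omega -> int,
       SRW P S /\
       {ae P, forall w,
          [/\ S 1%N w = eps w,
              (forall n, Tproc S n w = Sb n w),
              (forall n, `| Ybar Sb n w - `|S n w| | <= 2) &
              (forall s' : nat -> int, srw_path s' ->
                 (CV s' = (fun n => Sb n w) <->
                  (s' = (fun n => S n w) \/ s' = (fun n => - S n w))))]}.
Proof.
move=> hS he hi.
have hev : forall w, eps w = 1 \/ eps w = -1 by case: he => _ [].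
have hb : forall w, srw_path (fun k => Sb k w) by move=> w; exact: SRW_path.
have herv : int_rv eps by case: he.
exists (Sdef Sb eps); split.
  apply: (SRW_of_law hS).
  - by move=> w; rewrite /Sdef Tinv0 mulr0.
  - by move=> n; exact: Sdef_rv.
  - split; last by move=> i; exact: Xs_Sdef_rv.
    move=> i w; have [hp _ _] := Sdef_path (hb w) (hev w).
    have := hp.2 i; rewrite /Xs; lia.
  - exact: Sdef_unif.
apply: aeW => w; have [hp h1 hc] := Sdef_path (hb w) (hev w).
split => //.
- by move=> n; rewrite /Tproc hc.
- move=> n; have := Ybar_bound n hp; rewrite hc; exact.
- move=> s' hs'; split; last first.
    case=> ->; first exact: hc.
    by rewrite CV_neg; exact: hc.
  move=> hcv.
  have hs'0 := hs'.1; have hs'1 := hs'.2 0%N.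
  have hp0 := hp.1; have hp1 := hp.2 0%N.
  have hCV : forall j, CV s' j = CV (fun k => Sdef Sb eps k w) j.
    by move=> j; rewrite hcv hc.
  case: (eqVneq (s' 1%N) (Sdef Sb eps 1%N w)) => h.
  + left; apply: funext => k.
    apply: (@CV_inj s' (fun k => Sdef Sb eps k w) k) => //.
    * by rewrite hs'0 hp0.
    * by apply/eqP => e; move: hs'1; rewrite e subrr normr0.
  + right; apply: funext => k.
    have := @CV_inj (fun k => - s' k) (fun k => Sdef Sb eps k w) k.
    move=> /(_ _ _ _ _ k (leqnSn k)) H; rewrite -H ?opprK //.
    * by rewrite hs'0 hp0 oppr0.
    * move: h hs'1 hp1 hs'0 hp0 => /= /eqP; lia.
    * move: hs'1 hs'0 => /=; lia.
    * by move=> j _; rewrite CV_neg.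
Qed.

End ProbSec.

Unset Implicit Arguments.

Theorem corollary2 (d : measure_display) (Omega : measurableType d)
  (R : realType) (P : probability Omega R) :
  (* (1) *)
  (forall S : nat -> Omega -> int, SRW P S ->
     (forall n : nat,
        sjoin (sigma_rv (Tproc S) [set j | (j <= n)%N])
              (sigma_rv (fun _ => S 1%N) setT)
        = sigma_rv S [set j | (j <= n.+1)%N])
     /\ indep_rv_sigma P (S 1%N) (sigma_rv (Tproc S) setT))
  /\
  (* (2): the enlargement of the space is modelled by an independent sign eps *)
  (forall (Sb : nat -> Omega -> int) (eps : Omega -> int),
     SRW P Sb -> rademacher P eps -> indep_rv_sigma P eps (sigma_rv Sb setT) ->
     exists S : nat -> Omega -> int,
       SRW P S /\
       {ae P, forall w,
          [/\ S 1%N w = eps w,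
              (forall n, Tproc S n w = Sb n w),
              (forall n, `| Ybar Sb n w - `|S n w| | <= 2) &
              (forall s' : nat -> int, srw_path s' ->
                 (CV s' = (fun n => Sb n w) <->
                  (s' = (fun n => S n w) \/ s' = (fun n => - S n w))))]}).

Proof.
split.
- move=> S hS; split.
    move=> n; exact: (@part1i d Omega R P S n hS).
  exact: (@part1ii d Omega R P S hS).
- move=> Sb eps hS he hi; exact: (@part2 d Omega R P Sb eps hS he hi).
Qed.
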